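(* Let $(q_l)_{l\ge1}$ be positive numbers with $q_1=1$ and $0<R:=\lim_{l\to\infty}q_l/q_{l+1}<\infty$, and let $\gamma_l>0$ for all $l$. For every $\rho^*>0$ there exists an equilibrium state $z^*$ with $\rho(z^* )=\rho^*$ if and only if condition (EQ) holds: $\tilde f(1)>1$, or $\tilde f(1)=1$ and $\tilde g(1)<\infty$. Moreover, if (EQ) holds, then (a) there is a unique $\mu^*\in(0,1]$ with $\tilde f(\mu^* )=1$; (b) the equilibrium state $z^*$ with $\rho(z^* )=\rho^*$ lies in $X_+$ (all entries strictly positive) and is given by $$z^*_l=N^*\,\tilde q_l\,(\mu^* )^l\ (l\in\mathbb{N}),\qquad N^*=N(z^* )=\rho^*/\tilde g(\mu^* );$$ (c) $\tilde A(z^* )=\rho^*\ln\mu^*\le0$.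
   Context: $X=\{z=(z_l)_{l\ge1}:\sum_l l|z_l|<\infty\}$, $X_{0+}$ its nonnegative elements. For $z\in X$: $\rho(z)=\sum_l l z_l$, $N(z)=\sum_l z_l$, $J_l(z)=\gamma_l\big(z_1z_l-N(z)\frac{q_l}{q_{l+1}}z_{l+1}\big)$ for $l\ge1$ and $J_0(z)=-\sum_{l\ge1}J_l(z)$. An equilibrium state is some $z\in X_{0+}$ with $J_l(z)=0$ for all $l\ge0$. Set $\tilde q_l=q_lR^l$, $\tilde f(\mu)=\sum_{l\ge1}\tilde q_l\mu^l$, $\tilde g(\mu)=\sum_{l\ge1}l\,\tilde q_l\mu^l$ (both have radius of convergence $1$), $\tilde f(1)=\sum_l\tilde q_l\in(0,\infty]$, $\tilde g(1)=\sum_l l\tilde q_l\in(0,\infty]$. For $z\in X_{0+}\setminus\{0\}$, $\tilde A(z)=\sum_l z_l\ln\big(z_l/(\tilde q_lN(z))\big)$ with $0\ln0=0$, and $\tilde A(0)=0$. *)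

(* Defs.v *)
From Stdlib Require Import Reals.
From Coquelicot Require Import Coquelicot.
Open Scope R_scope.

(* Sequences (z_l)_{l>=1} are modelled as z : nat -> R; the value z 0 is
   never used.  Every series over l >= 1 is written as a series over n >= 0
   with term at index l = S n. *)

Definition inX (z : nat -> R) : Prop :=
  ex_series (fun n => INR (S n) * Rabs (z (S n))).

Definition inX0p (z : nat -> R) : Prop :=
  inX z /\ forall l, (1 <= l)%nat -> 0 <= z l.

Definition rhoz (z : nat -> R) : R := Series (fun n => INR (S n) * z (S n)).
Definition Nz (z : nat -> R) : R := Series (fun n => z (S n)).

Definition Jl (q gamma : nat -> R) (z : nat -> R) (l : nat) : R :=
  gamma l * (z 1%nat * z l - Nz z * (q l / q (S l)) * z (S l)).

Definition J0 (q gamma : nat -> R) (z : nat -> R) : R :=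
  - Series (fun n => Jl q gamma z (S n)).

Definition equilibrium (q gamma : nat -> R) (z : nat -> R) : Prop :=
  inX0p z /\ J0 q gamma z = 0 /\ forall l, (1 <= l)%nat -> Jl q gamma z l = 0.

Definition qt (q : nat -> R) (Rq : R) (l : nat) : R := q l * Rq ^ l.

(* tilde f(mu) = sum_{l>=1} tilde q_l mu^l, as an extended real (value +oo
   when the (nonnegative-term) series diverges). *)
Definition ftilde (q : nat -> R) (Rq : R) (mu : R) : Rbar :=
  Lim_seq (sum_n (fun n => qt q Rq (S n) * mu ^ (S n))).

Definition gtilde (q : nat -> R) (Rq : R) (mu : R) : Rbar :=
  Lim_seq (sum_n (fun n => INR (S n) * qt q Rq (S n) * mu ^ (S n))).

Definition EQcond (q : nat -> R) (Rq : R) : Prop :=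
  Rbar_lt 1 (ftilde q Rq 1)
  \/ (ftilde q Rq 1 = Finite 1 /\ Rbar_lt (gtilde q Rq 1) p_infty).

(* tilde A(z) = sum_l z_l ln(z_l / (tilde q_l N(z))), with 0 ln 0 = 0
   (for z = 0 every term vanishes, so tilde A(0) = 0). *)
Definition Aterm (q : nat -> R) (Rq : R) (z : nat -> R) (l : nat) : R :=
  if Req_EM_T (z l) 0 then 0 else z l * ln (z l / (qt q Rq l * Nz z)).

Definition Atilde (q : nat -> R) (Rq : R) (z : nat -> R) : R :=
  Series (fun n => Aterm q Rq z (S n)).

(* Main.v *)
Require Import Defs.
From Stdlib Require Import Reals Lra Lia Ranalysis5 Classical.
From Coquelicot Require Import Coquelicot.
Open Scope R_scope.

Lemma Qpos (q : nat -> R) (Rq : R) : (forall l, (1 <= l)%nat -> 0 < q l) -> 0 < Rq ->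
  forall l, (1 <= l)%nat -> 0 < qt q Rq l.
Proof. intros hq hR l hl. unfold qt. apply Rmult_lt_0_compat; auto. apply pow_lt; auto. Qed.

Lemma Q_ratio (q : nat -> R) (Rq : R) : (forall l, (1 <= l)%nat -> 0 < q l) ->
  is_lim_seq (fun l => q (S l) / q (S (S l))) Rq -> 0 < Rq ->
  is_lim_seq (fun n => Rabs (qt q Rq (S (S n)) / qt q Rq (S n))) 1.
Proof.
  intros hq hR hRp.
  assert (H := is_lim_seq_inv _ _ hR).
  assert (H2 : Finite Rq <> Finite 0) by (intro E; injection E; lra).
  specialize (H H2). simpl in H.
  apply (is_lim_seq_scal_l _ Rq) in H. simpl in H.
  replace (Rq * / Rq) with 1 in H by (field; lra).
  eapply is_lim_seq_ext; [|exact H].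
  intros n; simpl.
  assert (h1 := hq (S n) ltac:(lia)). assert (h2 := hq (S (S n)) ltac:(lia)).
  unfold qt. rewrite Rabs_pos_eq.
  - simpl. field. repeat split; try lra. apply pow_nonzero; lra.
  - apply Rle_trans with (Rq * / (q (S n) / q (S (S n)))).
    + apply Rmult_le_pos; [lra|]. left. apply Rinv_0_lt_compat. apply Rdiv_lt_0_compat; lra.
    + right. simpl. field. repeat split; try lra. apply pow_nonzero; lra.
Qed.

Lemma Q_radius (q : nat -> R) (Rq : R) : (forall l, (1 <= l)%nat -> 0 < q l) ->
  is_lim_seq (fun l => q (S l) / q (S (S l))) Rq -> 0 < Rq ->
  CV_radius (fun n => qt q Rq (S n)) = 1.
Proof.
  intros hq hR hRp.
  rewrite (CV_radius_finite_DAlembert _ 1).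
  - f_equal. apply Rinv_1.
  - intros n. apply Rgt_not_eq. apply Qpos; auto; lia.
  - lra.
  - apply Q_ratio; auto.
Qed.

Lemma Q_radius0 (q : nat -> R) (Rq : R) : (forall l, (1 <= l)%nat -> 0 < q l) ->
  is_lim_seq (fun l => q (S l) / q (S (S l))) Rq -> 0 < Rq ->
  CV_radius (qt q Rq) = 1.
Proof.
  intros hq hR hRp. rewrite <- (CV_radius_decr_1 (qt q Rq)).
  rewrite <- (Q_radius q Rq hq hR hRp). apply CV_radius_ext. reflexivity.
Qed.

Lemma ex_f (q : nat -> R) (Rq : R) mu : (forall l, (1 <= l)%nat -> 0 < q l) ->
  is_lim_seq (fun l => q (S l) / q (S (S l))) Rq -> 0 < Rq -> 0 <= mu < 1 ->
  ex_series (fun n => qt q Rq (S n) * mu ^ (S n)).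
Proof.
  intros hq hR hRp hmu.
  assert (H : ex_pseries (fun n => qt q Rq (S n)) mu).
  { apply CV_radius_inside. rewrite (Q_radius q Rq hq hR hRp). simpl.
    rewrite Rabs_pos_eq; lra. }
  apply (ex_series_scal_l mu) in H.
  eapply ex_series_ext; [|exact H]. intros n. simpl.
  rewrite pow_n_pow. change scal with Rmult. simpl. unfold mult. simpl. ring.
Qed.

Lemma ex_g (q : nat -> R) (Rq : R) mu : (forall l, (1 <= l)%nat -> 0 < q l) ->
  is_lim_seq (fun l => q (S l) / q (S (S l))) Rq -> 0 < Rq -> 0 <= mu < 1 ->
  ex_series (fun n => INR (S n) * qt q Rq (S n) * mu ^ (S n)).
Proof.
  intros hq hR hRp hmu.
  assert (H : ex_pseries (PS_derive (qt q Rq)) mu).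
  { apply CV_radius_inside. rewrite CV_radius_derive. rewrite (Q_radius0 q Rq hq hR hRp). simpl.
    rewrite Rabs_pos_eq; lra. }
  apply (ex_series_scal_l mu) in H.
  eapply ex_series_ext; [|exact H]. intros n. unfold PS_derive.
  rewrite pow_n_pow. change scal with Rmult. simpl. unfold mult. simpl. ring.
Qed.

Lemma not_ex_f (q : nat -> R) (Rq : R) mu : (forall l, (1 <= l)%nat -> 0 < q l) ->
  is_lim_seq (fun l => q (S l) / q (S (S l))) Rq -> 0 < Rq -> 1 < mu ->
  ~ ex_series (fun n => qt q Rq (S n) * mu ^ (S n)).
Proof.
  intros hq hR hRp hmu Hex.
  apply ex_series_lim_0 in Hex. revert Hex.
  apply (not_ex_series_DAlembert _ mu); [lra| |].
  - intros n. apply Rgt_not_eq. apply Rmult_lt_0_compat.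
    apply Qpos; auto; lia. apply pow_lt; lra.
  - assert (H := is_lim_seq_scal_l _ mu _ (Q_ratio q Rq hq hR hRp)).
    simpl in H. rewrite Rmult_1_r in H.
    eapply is_lim_seq_ext; [|exact H]. intros n.
    assert (h1 := Qpos q Rq hq hRp (S n) ltac:(lia)).
    assert (h2 := Qpos q Rq hq hRp (S (S n)) ltac:(lia)).
    assert (hp : 0 < mu ^ S n) by (apply pow_lt; lra).
    rewrite !Rabs_pos_eq.
    + simpl. field. assert (mu ^ n <> 0) by (apply pow_nonzero; lra). repeat split; lra.
    + apply Rlt_le, Rdiv_lt_0_compat; auto.
    + apply Rlt_le, Rdiv_lt_0_compat; apply Rmult_lt_0_compat; auto; apply pow_lt; lra.
Qed.

Lemma sum_Sn_R (a : nat -> R) n : sum_n a (S n) = sum_n a n + a (S n).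
Proof. rewrite sum_Sn. reflexivity. Qed.

Lemma sum_n_incr (a : nat -> R) : (forall n, 0 <= a n) -> forall n, sum_n a n <= sum_n a (S n).
Proof. intros Ha n. rewrite sum_Sn. unfold plus; simpl. specialize (Ha (S n)). lra. Qed.

Lemma sum_n_nonneg (a : nat -> R) : (forall n, 0 <= a n) -> forall n, 0 <= sum_n a n.
Proof.
  intros Ha n. induction n. rewrite sum_O. auto.
  rewrite sum_Sn. unfold plus; simpl. specialize (Ha (S n)). lra.
Qed.

Lemma series_ge_partial (a : nat -> R) l : is_series a l -> (forall n, 0 <= a n) ->
  forall n, sum_n a n <= l.
Proof. intros H Ha. apply is_lim_seq_incr_compare. exact H. apply sum_n_incr; auto. Qed.

Lemma mono_partial (q : nat -> R) (Rq : R) mu nu :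
  (forall l, (1 <= l)%nat -> 0 < q l) -> 0 < Rq -> 0 <= mu <= nu -> forall n,
  sum_n (fun k => qt q Rq (S k) * mu ^ (S k)) n + qt q Rq 1 * (nu - mu)
  <= sum_n (fun k => qt q Rq (S k) * nu ^ (S k)) n.
Proof.
  intros hq hRp hmn n. induction n.
  - rewrite !sum_O. simpl. lra.
  - rewrite !sum_Sn_R.
    assert (h := Qpos q Rq hq hRp (S (S n)) ltac:(lia)).
    assert (hp : mu ^ S (S n) <= nu ^ S (S n)) by (apply pow_incr; lra).
    assert (hp2 : qt q Rq (S (S n)) * mu ^ S (S n) <= qt q Rq (S (S n)) * nu ^ S (S n))
      by (apply Rmult_le_compat_l; lra).
    lra.
Qed.

Lemma mono_strict (q : nat -> R) (Rq : R) mu nu :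
  (forall l, (1 <= l)%nat -> 0 < q l) -> 0 < Rq -> 0 <= mu <= nu ->
  is_lim_seq (sum_n (fun k => qt q Rq (S k) * mu ^ (S k))) 1 ->
  Rbar_le (Finite (1 + qt q Rq 1 * (nu - mu))) (ftilde q Rq nu).
Proof.
  intros hq hRp hmn Hl. unfold ftilde.
  assert (H : is_lim_seq (fun n => sum_n (fun k => qt q Rq (S k) * mu ^ (S k)) n + qt q Rq 1 * (nu - mu))
    (1 + qt q Rq 1 * (nu - mu))).
  { apply is_lim_seq_plus'. exact Hl. apply is_lim_seq_const. }
  rewrite <- (is_lim_seq_unique _ _ H).
  apply Lim_seq_le_loc. apply filter_forall. intros n. apply mono_partial; auto.
Qed.

Lemma ftilde_lim (q : nat -> R) (Rq : R) mu :
  (forall l, (1 <= l)%nat -> 0 < q l) -> 0 < Rq -> 0 <= mu ->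
  ftilde q Rq mu = Finite 1 ->
  is_lim_seq (sum_n (fun k => qt q Rq (S k) * mu ^ (S k))) 1.
Proof.
  intros hq hRp hmu H. unfold ftilde in H. rewrite <- H.
  apply Lim_seq_correct. apply ex_lim_seq_incr. apply sum_n_incr.
  intros n. apply Rmult_le_pos. left; apply (Qpos q Rq hq hRp); lia. apply pow_le; auto.
Qed.

Lemma mu_unique (q : nat -> R) (Rq : R) mu nu :
  (forall l, (1 <= l)%nat -> 0 < q l) -> 0 < Rq -> 0 <= mu -> 0 <= nu ->
  ftilde q Rq mu = Finite 1 -> ftilde q Rq nu = Finite 1 -> mu = nu.
Proof.
  intros hq hRp hmu hnu H1 H2.
  assert (hQ := Qpos q Rq hq hRp 1 ltac:(lia)).
  destruct (Rtotal_order mu nu) as [h|[h|h]]; auto.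
  - assert (K := mono_strict q Rq mu nu hq hRp ltac:(lra) (ftilde_lim q Rq mu hq hRp hmu H1)).
    rewrite H2 in K. simpl in K. nra.
  - assert (K := mono_strict q Rq nu mu hq hRp ltac:(lra) (ftilde_lim q Rq nu hq hRp hnu H2)).
    rewrite H1 in K. simpl in K. nra.
Qed.

Lemma bernoulli e k : 0 <= e <= 1 -> 1 - INR k * e <= (1 - e) ^ k.
Proof.
  intros he. induction k.
  - simpl. lra.
  - rewrite S_INR. simpl.
    assert (hk : 0 <= INR k) by apply pos_INR.
    assert (h1 : (1 - e) * (1 - INR k * e) <= (1 - e) * (1 - e) ^ k)
      by (apply Rmult_le_compat_l; lra).
    nra.
Qed.

Lemma partial_lower (q : nat -> R) (Rq : R) mu :
  (forall l, (1 <= l)%nat -> 0 < q l) -> 0 < Rq -> 0 <= mu <= 1 -> forall n,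
  mu ^ (S n) * sum_n (fun k => qt q Rq (S k) * 1 ^ (S k)) n
  <= sum_n (fun k => qt q Rq (S k) * mu ^ (S k)) n.
Proof.
  intros hq hRp hmu n. induction n.
  - rewrite !sum_O. rewrite pow1. lra.
  - rewrite !sum_Sn_R. rewrite pow1.
    assert (h := Qpos q Rq hq hRp (S (S n)) ltac:(lia)).
    assert (hs : 0 <= sum_n (fun k => qt q Rq (S k) * 1 ^ (S k)) n).
    { apply sum_n_nonneg. intros k. rewrite pow1.
      assert (h' := Qpos q Rq hq hRp (S k) ltac:(lia)). lra. }
    assert (hp : mu ^ S (S n) <= mu ^ S n).
    { change (mu ^ S (S n)) with (mu * mu ^ S n).
      assert (0 <= mu ^ S n) by (apply pow_le; lra). nra. }
    assert (h2 : mu ^ S (S n) * sum_n (fun k => qt q Rq (S k) * 1 ^ (S k)) n <=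
                 mu ^ S n * sum_n (fun k => qt q Rq (S k) * 1 ^ (S k)) n)
      by (apply Rmult_le_compat_r; lra).
    lra.
Qed.

Definition Ff (q : nat -> R) (Rq : R) (x : R) := x * PSeries (fun n => qt q Rq (S n)) x.

Lemma Ff_series (q : nat -> R) (Rq : R) mu : (forall l, (1 <= l)%nat -> 0 < q l) ->
  is_lim_seq (fun l => q (S l) / q (S (S l))) Rq -> 0 < Rq -> 0 <= mu < 1 ->
  is_series (fun n => qt q Rq (S n) * mu ^ (S n)) (Ff q Rq mu).
Proof.
  intros hq hR hRp hmu.
  assert (H := Series_correct _ (ex_f q Rq mu hq hR hRp hmu)).
  replace (Ff q Rq mu) with (Series (fun n => qt q Rq (S n) * mu ^ (S n))); auto.
  unfold Ff, PSeries. rewrite <- Series_scal_l. apply Series_ext. intros n. simpl. ring.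
Qed.

Lemma Ff_cont (q : nat -> R) (Rq : R) a : (forall l, (1 <= l)%nat -> 0 < q l) ->
  is_lim_seq (fun l => q (S l) / q (S (S l))) Rq -> 0 < Rq -> 0 <= a < 1 ->
  continuity_pt (fun x => Ff q Rq x - 1) a.
Proof.
  intros hq hR hRp ha.
  apply (continuity_pt_minus (fun x => Ff q Rq x) (fun _ => 1)).
  - apply (continuity_pt_mult (fun x => x) (PSeries (fun n => qt q Rq (S n)))).
    + apply derivable_continuous_pt. apply derivable_pt_id.
    + apply PSeries_continuity. rewrite (Q_radius q Rq hq hR hRp). simpl.
      rewrite Rabs_pos_eq; lra.
  - apply continuity_pt_const. intros x y. reflexivity.
Qed.

Lemma exist_mu (q : nat -> R) (Rq : R) : (forall l, (1 <= l)%nat -> 0 < q l) ->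
  is_lim_seq (fun l => q (S l) / q (S (S l))) Rq -> 0 < Rq -> EQcond q Rq ->
  exists mu, 0 < mu <= 1 /\ is_series (fun n => qt q Rq (S n) * mu ^ (S n)) 1
    /\ ex_series (fun n => INR (S n) * qt q Rq (S n) * mu ^ (S n)).
Proof.
  intros hq hR hRp [H1 | [H1 H2]].
  -
    set (S1 := sum_n (fun k => qt q Rq (S k) * 1 ^ (S k))).
    assert (Hn : exists n, 1 < S1 n).
    { destruct (classic (exists n, 1 < S1 n)) as [h|h]; auto.
      exfalso. assert (K : Rbar_le (Lim_seq S1) (Lim_seq (fun _ => 1))).
      { apply Lim_seq_le_loc. apply filter_forall. intros n.
        apply Rnot_lt_le. intro c. apply h. exists n; auto. }
      rewrite Lim_seq_const in K. unfold ftilde in H1. fold S1 in H1.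
      exact (Rbar_le_not_lt _ _ K H1). }
    destruct Hn as [n Hn].
    set (S := S1 n) in *. set (m := INR (Datatypes.S n)).
    assert (hm : 1 <= m) by (unfold m; rewrite S_INR; assert (0 <= INR n) by apply pos_INR; lra).
    set (e := (S - 1) / (2 * m * S)).
    assert (he : 0 < e <= 1/2).
    { unfold e. split. apply Rdiv_lt_0_compat; nra.
      apply Rmult_le_reg_r with (2 * m * S). nra.
      unfold Rdiv. rewrite Rmult_assoc, Rinv_l by nra. nra. }
    set (mu1 := 1 - e).
    assert (hb := bernoulli e (Datatypes.S n) ltac:(lra)). fold m in hb. fold mu1 in hb.
    assert (hme : m * e * S = (S - 1) / 2) by (unfold e; field; nra).
    assert (hgt : 1 < mu1 ^ (Datatypes.S n) * S) by nra.
    assert (hpl := partial_lower q Rq mu1 hq hRp ltac:(unfold mu1; lra) n).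
    fold S1 in hpl. fold S in hpl.
    assert (hF := Ff_series q Rq mu1 hq hR hRp ltac:(unfold mu1; lra)).
    assert (hge := series_ge_partial _ _ hF ltac:(intros k; apply Rmult_le_pos;
      [left; apply (Qpos q Rq hq hRp); lia | apply pow_le; unfold mu1; lra]) n).
    destruct (IVT_interv (fun x => Ff q Rq x - 1) 0 mu1) as [z [hz1 hz2]].
    + intros a ha. apply Ff_cont; auto. unfold mu1 in ha; lra.
    + unfold mu1; lra.
    + unfold Ff. lra.
    + lra.
    + assert (hz0 : z <> 0). { intro c. rewrite c in hz2. unfold Ff in hz2. lra. }
      assert (hzp : 0 < z) by (destruct hz1 as [[h|h] _]; [exact h | congruence]).
      exists z. split; [split; unfold mu1 in hz1; lra|]. split.
      * replace 1 with (Ff q Rq z) by lra. apply Ff_series; auto. unfold mu1 in hz1; lra.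
      * apply ex_g; auto. unfold mu1 in hz1; lra.
  - exists 1. split; [lra|]. split.
    + apply ftilde_lim; auto. lra.
    + set (G := sum_n (fun n => INR (S n) * qt q Rq (S n) * 1 ^ (S n))).
      assert (hG : is_lim_seq G (Lim_seq G)).
      { apply Lim_seq_correct, ex_lim_seq_incr, sum_n_incr. intros k. rewrite pow1.
        assert (h' := Qpos q Rq hq hRp (S k) ltac:(lia)).
        assert (0 <= INR (S k)) by apply pos_INR. nra. }
      assert (h0 : Rbar_le (Lim_seq (fun _ => 0)) (Lim_seq G)).
      { apply Lim_seq_le_loc. apply filter_forall. intros k. apply sum_n_nonneg.
        intros j. rewrite pow1.
        assert (h' := Qpos q Rq hq hRp (S j) ltac:(lia)).
        assert (0 <= INR (S j)) by apply pos_INR. nra. }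
      rewrite Lim_seq_const in h0. unfold gtilde in H2. fold G in H2.
      destruct (Lim_seq G) as [g| |] eqn:E.
      * exists g. exact hG.
      * simpl in H2. contradiction.
      * simpl in h0. contradiction.
Qed.

Lemma is_series_scal_R (a : nat -> R) c l : is_series a l -> is_series (fun n => c * a n) (c * l).
Proof. intros H. exact (is_series_scal_l c a l H). Qed.

Lemma is_series_ext_R (a b : nat -> R) l : (forall n, a n = b n) -> is_series a l -> is_series b l.
Proof. intros H. apply is_series_ext. exact H. Qed.

Lemma Series_zero : Series (fun _ => 0) = 0.
Proof.
  rewrite (Series_ext _ (fun n => 0 * 1)) by (intros; ring).
  rewrite Series_scal_l. ring.
Qed.

Lemma term_le_partial (a : nat -> R) : (forall n, 0 <= a n) -> forall n, a n <= sum_n a n.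
Proof.
  intros Ha n. destruct n. rewrite sum_O; lra.
  rewrite sum_Sn_R. assert (h := sum_n_nonneg a Ha n). lra.
Qed.

Lemma eq_char (q gamma : nat -> R) (Rq : R) z rho :
  (forall l, (1 <= l)%nat -> 0 < q l) -> q 1%nat = 1 ->
  is_lim_seq (fun l => q (S l) / q (S (S l))) Rq -> 0 < Rq ->
  (forall l, (1 <= l)%nat -> 0 < gamma l) ->
  0 < rho -> equilibrium q gamma z -> rhoz z = rho ->
  0 < Nz z /\ 0 < z 1%nat /\ 0 < z 1%nat / (Nz z * Rq) <= 1 /\
  (forall n, z (S n) = Nz z * qt q Rq (S n) * (z 1%nat / (Nz z * Rq)) ^ (S n)) /\
  is_series (fun n => qt q Rq (S n) * (z 1%nat / (Nz z * Rq)) ^ (S n)) 1 /\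
  is_series (fun n => INR (S n) * qt q Rq (S n) * (z 1%nat / (Nz z * Rq)) ^ (S n)) (rho / Nz z).
Proof.
  intros hq hq1 hR hRp hg hrho [[hX hnn] [hJ0 hJ]] hrz.
  assert (hnn' : forall n, 0 <= z (S n)) by (intros n; apply hnn; lia).
  assert (hXs : ex_series (fun n => INR (S n) * z (S n))).
  { eapply ex_series_ext; [|exact hX]. intros n. simpl. rewrite (Rabs_pos_eq (z (S n))); auto. }
  assert (hrs : is_series (fun n => INR (S n) * z (S n)) rho).
  { rewrite <- hrz. apply Series_correct. exact hXs. }
  assert (hNe : ex_series (fun n => z (S n))).
  { refine (@ex_series_le R_AbsRing R_CompleteNormedModule (fun n => z (S n)) _ _ hXs). intros n.
    change (norm (z (S n))) with (Rabs (z (S n))). rewrite Rabs_pos_eq by auto.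
    rewrite S_INR. assert (0 <= INR n) by apply pos_INR. specialize (hnn' n). nra. }
  assert (hNs : is_series (fun n => z (S n)) (Nz z)) by (apply Series_correct; exact hNe).
  assert (hzN : forall n, z (S n) <= Nz z).
  { intros n. eapply Rle_trans. apply (term_le_partial (fun n => z (S n)) hnn' n).
    apply series_ge_partial; auto. }
  assert (hzero : ~ (forall n, z (S n) = 0)).
  { intros h0. assert (E : is_series (fun _ => 0) rho).
    { eapply is_series_ext; [|exact hrs]. intros n. cbv beta. rewrite h0. apply Rmult_0_r. }
    apply is_series_unique in E. rewrite Series_zero in E. lra. }
  assert (hNp : 0 < Nz z).
  { destruct (Rle_lt_dec (Nz z) 0) as [h|h]; auto. exfalso. apply hzero.
    intros n. specialize (hzN n). specialize (hnn' n). lra. }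
  assert (hJ' : forall l, (1 <= l)%nat -> z 1%nat * z l = Nz z * (q l / q (S l)) * z (S l)).
  { intros l hl. specialize (hJ l hl). unfold Jl in hJ. specialize (hg l hl).
    apply Rmult_integral in hJ. destruct hJ as [h|h]; lra. }
  assert (hz1 : 0 < z 1%nat).
  { destruct (Rle_lt_dec (z 1%nat) 0) as [h|h]; auto. exfalso. apply hzero.
    assert (e1 : z 1%nat = 0) by (specialize (hnn' 0%nat); lra).
    intros n. destruct n; auto.
    specialize (hJ' (S n) ltac:(lia)). rewrite e1 in hJ'.
    assert (h1 := hq (S n) ltac:(lia)). assert (h2 := hq (S (S n)) ltac:(lia)).
    assert (hqq : 0 < q (S n) / q (S (S n))) by (apply Rdiv_lt_0_compat; lra).
    assert (Nz z * (q (S n) / q (S (S n))) * z (S (S n)) = 0) by lra.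
    apply Rmult_integral in H. destruct H as [H|H]; auto. nra. }
  set (N := Nz z) in *. set (mu := z 1%nat / (N * Rq)).
  assert (hmu : 0 < mu) by (unfold mu; apply Rdiv_lt_0_compat; nra).
  assert (hform : forall n, z (S n) = N * qt q Rq (S n) * mu ^ (S n)).
  { induction n.
    - unfold mu, qt. rewrite hq1. simpl. field. lra.
    - specialize (hJ' (S n) ltac:(lia)).
      assert (h1 := hq (S n) ltac:(lia)). assert (h2 := hq (S (S n)) ltac:(lia)).
      assert (E : z (S (S n)) = z 1%nat * z (S n) * q (S (S n)) / (N * q (S n))).
      { rewrite hJ'. field. lra. }
      rewrite E, IHn. unfold mu, qt. simpl. field. repeat split; try lra.
      }
  assert (hf : is_series (fun n => qt q Rq (S n) * mu ^ (S n)) 1).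
  { replace 1 with (/ N * N) by (field; lra).
    eapply is_series_ext_R; [|apply (is_series_scal_R _ (/ N) _ hNs)].
    intros n. cbv beta. rewrite hform. field. lra. }
  assert (hg' : is_series (fun n => INR (S n) * qt q Rq (S n) * mu ^ (S n)) (rho / N)).
  { replace (rho / N) with (/ N * rho) by (field; lra).
    eapply is_series_ext_R; [|apply (is_series_scal_R _ (/ N) _ hrs)].
    intros n. cbv beta. rewrite hform. field. lra. }
  assert (hmu1 : mu <= 1).
  { destruct (Rle_lt_dec mu 1) as [h|h]; auto. exfalso.
    apply (not_ex_f q Rq mu hq hR hRp h). exists 1. exact hf. }
  repeat split; auto.
Qed.

Lemma ln_le1 x : 0 < x <= 1 -> ln x <= 0.
Proof.
  intros [h0 h1]. destruct h1 as [h|h].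
  - rewrite <- ln_1. left. apply ln_increasing; auto.
  - rewrite h, ln_1. lra.
Qed.

Theorem theorem7 (q gamma : nat -> R) (Rq : R)
  (hq_pos : forall l, (1 <= l)%nat -> 0 < q l)
  (hq1 : q 1%nat = 1)
  (hR : is_lim_seq (fun l => q (S l) / q (S (S l))) Rq)
  (hR_pos : 0 < Rq)
  (hgamma : forall l, (1 <= l)%nat -> 0 < gamma l) :
  ((forall rho_s, 0 < rho_s ->
      exists z, equilibrium q gamma z /\ rhoz z = rho_s)
   <-> EQcond q Rq)
  /\
  (EQcond q Rq ->
   exists mu_s,
     (0 < mu_s <= 1 /\ ftilde q Rq mu_s = Finite 1)
     /\ (forall mu, 0 < mu <= 1 -> ftilde q Rq mu = Finite 1 -> mu = mu_s)
     /\ (forall rho_s, 0 < rho_s ->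
           forall z, equilibrium q gamma z -> rhoz z = rho_s ->
             (forall l, (1 <= l)%nat -> 0 < z l)
             /\ (forall l, (1 <= l)%nat -> z l = Nz z * qt q Rq l * mu_s ^ l)
             /\ (exists g, gtilde q Rq mu_s = Finite g /\ Nz z = rho_s / g)
             /\ Atilde q Rq z = rho_s * ln mu_s
             /\ rho_s * ln mu_s <= 0)).
Proof.
  assert (hQ := Qpos q Rq hq_pos hR_pos).
  assert (hQ1 := hQ 1%nat ltac:(lia)).
  split.
  - split.
    + intros H. destruct (H 1 Rlt_0_1) as [z [hz hrz]].
      destruct (eq_char q gamma Rq z 1 hq_pos hq1 hR hR_pos hgamma Rlt_0_1 hz hrz)
        as [hN [hz1 [[hmu0 hmu1] [hform [hf hg]]]]].
      set (mu := z 1%nat / (Nz z * Rq)) in *.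
      destruct hmu1 as [hlt | heq].
      * left.
        assert (K := mono_strict q Rq mu 1 hq_pos hR_pos ltac:(lra) hf).
        eapply Rbar_lt_le_trans; [|exact K]. simpl. nra.
      * right. rewrite heq in hf, hg. split.
        -- unfold ftilde. apply is_lim_seq_unique. exact hf.
        -- unfold gtilde.
           rewrite (is_lim_seq_unique (sum_n (fun n => INR (S n) * qt q Rq (S n) * 1 ^ S n)) (Finite (1 / Nz z)) hg).
           simpl. exact I.
    + intros HEQ rho hrho.
      destruct (exist_mu q Rq hq_pos hR hR_pos HEQ) as [mu [[h0 h1] [hf [G hG]]]].
      assert (hGp : 0 < G).
      { assert (K := series_ge_partial _ _ hG ltac:(intros k; assert (0 <= INR (S k)) by apply pos_INR;
          assert (0 < qt q Rq (S k)) by (apply hQ; lia); assert (0 <= mu ^ S k) by (apply pow_le; lra); 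
          apply Rmult_le_pos; [apply Rmult_le_pos|]; lra) 0%nat).
        rewrite sum_O in K. simpl in K. nra. }
      set (N := rho / G).
      assert (hNp : 0 < N) by (unfold N; apply Rdiv_lt_0_compat; lra).
      set (z := fun l => N * qt q Rq l * mu ^ l).
      assert (hNz : Nz z = N).
      { unfold Nz, z. rewrite (Series_ext _ (fun n => N * (qt q Rq (S n) * mu ^ S n))) by (intros; ring).
        rewrite Series_scal_l. rewrite (is_series_unique _ _ hf). ring. }
      assert (hrs : is_series (fun n => INR (S n) * z (S n)) rho).
      { replace rho with (N * G) by (unfold N; field; lra).
        eapply is_series_ext_R; [|apply (is_series_scal_R _ N _ hG)].
        intros n. unfold z. ring. }
      assert (hzp : forall l, (1 <= l)%nat -> 0 < z l).
      { intros l hl. unfold z. apply Rmult_lt_0_compat. apply Rmult_lt_0_compat; auto.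
        apply pow_lt; lra. }
      assert (hJ : forall l, (1 <= l)%nat -> Jl q gamma z l = 0).
      { intros l hl. unfold Jl. rewrite hNz. unfold z, qt. rewrite hq1.
        assert (h2 := hq_pos (S l) ltac:(lia)).
        simpl. field. lra. }
      exists z. split.
      * split; [split|split].
        -- exists rho. eapply is_series_ext_R; [|exact hrs]. intros n.
           rewrite Rabs_pos_eq; auto. left; apply hzp; lia.
        -- intros l hl. left; auto.
        -- unfold J0. rewrite (Series_ext _ (fun _ => 0)). rewrite Series_zero. ring.
           intros n. apply hJ. lia.
        -- exact hJ.
      * unfold rhoz. apply is_series_unique. exact hrs.
  - intros HEQ.
    destruct (exist_mu q Rq hq_pos hR hR_pos HEQ) as [mu [[h0 h1] [hf hgex]]].
    assert (hfmu : ftilde q Rq mu = Finite 1) by (unfold ftilde; apply is_lim_seq_unique; exact hf).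
    exists mu. split; [split; [split; auto | exact hfmu]|]. split.
    + intros nu hnu hfnu. apply (mu_unique q Rq nu mu hq_pos hR_pos); auto; lra.
    + intros rho hrho z hz hrz.
      destruct (eq_char q gamma Rq z rho hq_pos hq1 hR hR_pos hgamma hrho hz hrz)
        as [hN [hz1 [[hmu0 hmu1] [hform [hf' hg]]]]].
      set (mz := z 1%nat / (Nz z * Rq)) in *.
      assert (E : mz = mu).
      { apply (mu_unique q Rq mz mu hq_pos hR_pos); [lra|lra| |exact hfmu].
        unfold ftilde; apply is_lim_seq_unique; exact hf'. }
      rewrite E in hform, hg.
      assert (hzp : forall n, 0 < z (S n)).
      { intros n. rewrite hform. apply Rmult_lt_0_compat. apply Rmult_lt_0_compat; auto.
        apply hQ; lia. apply pow_lt; lra. }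
      split; [|split; [|split; [|split]]].
      * intros l hl. destruct l; [lia|]. auto.
      * intros l hl. destruct l; [lia|]. auto.
      * exists (rho / Nz z). split.
        -- unfold gtilde. apply is_lim_seq_unique. exact hg.
        -- field. split; lra.
      * unfold Atilde.
        rewrite (Series_ext _ (fun n => ln mu * (INR (S n) * z (S n)))).
        -- rewrite Series_scal_l. fold (rhoz z). rewrite hrz. ring.
        -- intros n. unfold Aterm. destruct (Req_EM_T (z (S n)) 0) as [e|e].
           ++ specialize (hzp n). lra.
           ++ assert (hQn : 0 < qt q Rq (S n)) by (apply hQ; lia).
              replace (z (S n) / (qt q Rq (S n) * Nz z)) with (mu ^ S n).
              ** rewrite ln_pow by lra. ring.
              ** rewrite hform. field. split; lra.
      * assert (ln mu <= 0) by (apply ln_le1; lra). nra.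
Qed.
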